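(* Let $n\ge 1$ and let $\gamma_{n,k}^S$ be the integers defined by $$\sum_{\pi\in\mathfrak{S}_n(2413,3142)}t^{\mathrm{des}(\pi)}=\sum_{k=0}^{\lfloor\frac{n-1}{2}\rfloor}\gamma_{n,k}^S\, t^k (1+t)^{n-1-2k}.$$ Then for $0\le k\le\lfloor (n-1)/2\rfloor$, $\gamma_{n,k}^S=|\mathfrak{D}\mathfrak{T}_{n,k}^{1}|$, where $$\mathfrak{D}\mathfrak{T}_{n,k}^{1} :=\{T\in\mathfrak{D}\mathfrak{T}_n : r_{o}(T)=n-1-2k \text{ and every right chain of odd length in $T$ has first node labelled }\oplus \}.$$
   Context: $\mathfrak{S}_n(2413,3142)$ is the set of permutations of $[n]$ avoiding the patterns $2413$ and $3142$; $\mathrm{des}(\pi)=\#\{i\in[n-1]:\pi_i>\pi_{i+1}\}$. (The integers $\gamma^S_{n,k}$ are uniquely determined, this polynomial being palindromic of darga $n-1$.) A binary tree is either empty or consists of a root with a left and a right subtree, both binary trees. A right chain is a maximal sequence of nodes $v_1,\dots,v_l$ with $v_1$ the root or a left child and each $v_{j+1}$ the right child of $v_j$; $l$ is its length and $v_1$ its first node. $r_o(T)$ is the number of right chains of odd length in $T$. A di-sk tree is a binary tree with nodes labelled $\oplus$ or $\ominus$ such that labels alternate along every right chain; $\mathfrak{D}\mathfrak{T}_n$ is the set of di-sk trees with $n-1$ nodes. *)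

(* Defs.v *)
From HB Require Import structures.
From mathcomp Require Import all_boot all_order all_algebra all_fingroup.
From Stdlib Require List.
Set Implicit Arguments. Unset Strict Implicit. Unset Printing Implicit Defensive.
Import GRing.Theory.

(* values of a permutation of [n] = {1..n}, represented on 'I_n (shift by 1
   is irrelevant for patterns and descents) *)
Definition pval n (pi : {perm 'I_n}) (i : 'I_n) : nat := val (pi i).

Definition contains_pat n k (p : 'I_k -> nat) (pi : {perm 'I_n}) : bool :=
  [exists f : {ffun 'I_k -> 'I_n},
     [forall a : 'I_k, forall b : 'I_k,
        ((a < b)%N ==> (f a < f b)%N) &&
        ((pval pi (f a) < pval pi (f b))%N == (p a < p b)%N)]].

Definition pat2413 : 'I_4 -> nat := fun i => nth 0%N [:: 2; 4; 1; 3]%N i.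
Definition pat3142 : 'I_4 -> nat := fun i => nth 0%N [:: 3; 1; 4; 2]%N i.

Definition avoids_2413_3142 n (pi : {perm 'I_n}) : bool :=
  ~~ contains_pat pat2413 pi && ~~ contains_pat pat3142 pi.

Definition des n (pi : {perm 'I_n}) : nat :=
  let s := [seq pval pi i | i <- enum 'I_n] in
  \sum_(i < n.-1) (nth 0 s i.+1 < nth 0 s i)%N.

(* label true = (+), false = (-) *)
Inductive tree : Type :=
| Leaf : tree
| Node : bool -> tree -> tree -> tree.

Fixpoint nnodes (t : tree) : nat :=
  match t with Leaf => 0 | Node _ l r => (nnodes l + nnodes r).+1 end.

Fixpoint spine (t : tree) : seq bool :=
  match t with Leaf => [::] | Node a _ r => a :: spine r end.

(* the right chains of t, each given by its sequence of labels (first node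
   first); st = whether the root of t is the first node of a chain
   (i.e. it is the root of the whole tree or a left child) *)
Fixpoint chains (st : bool) (t : tree) : seq (seq bool) :=
  match t with
  | Leaf => [::]
  | Node _ l r => (if st then [:: spine t] else [::]) ++ chains true l ++ chains false r
  end.

Definition right_chains (T : tree) : seq (seq bool) := chains true T.

Definition r_o (T : tree) : nat := count (fun c => odd (size c)) (right_chains T).

Definition is_disk (T : tree) : bool :=
  all (fun c => sorted (fun a b : bool => a != b) c) (right_chains T).

Definition in_DT (n : nat) (T : tree) : bool := is_disk T && (nnodes T == n.-1).

Definition in_DT1 (n k : nat) (T : tree) : bool :=
  [&& in_DT n T, r_o T == (n.-1 - 2 * k)%N &
      all (fun c => odd (size c) ==> (head false c == true)) (right_chains T)].

Definition card_trees (P : tree -> bool) (c : nat) : Prop :=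
  exists l : list tree, List.NoDup l /\ (forall t, List.In t l <-> P t) /\ List.length l = c.

Open Scope ring_scope.

Definition des_poly (n : nat) : {poly int} :=
  \sum_(pi : {perm 'I_n} | avoids_2413_3142 pi) 'X^(des pi).

Definition gamma_expansion (n : nat) (g : nat -> int) : {poly int} :=
  \sum_(k < (n.-1)./2.+1) (g k)%:P * 'X^k * (1 + 'X) ^+ (n.-1 - 2 * k)%N.

(* Main.v *)
Require Import Defs.
From HB Require Import structures.
From mathcomp Require Import all_boot all_order all_algebra all_fingroup.
From mathcomp Require Import zify ring.
Import Defs.
Set Implicit Arguments. Unset Strict Implicit. Unset Printing Implicit Defensive.
Open Scope nat_scope.
Definition has4 (R : nat -> nat -> nat -> nat -> bool) (l : seq nat) : Prop :=
  exists i0 i1 i2 i3, [/\ i0 < i1, i1 < i2, i2 < i3, i3 < size l &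
     R (nth 0 l i0) (nth 0 l i1) (nth 0 l i2) (nth 0 l i3)].

Definition P2413 (r : rel nat) a b c d := [&& r c a, r a d & r d b].
Definition lt' : rel nat := fun a b => a < b.
Definition gtn' : rel nat := fun a b => b < a.

Lemma has4_catl R s t : has4 R s -> has4 R (s ++ t).
Proof.
move=> [i0 [i1 [i2 [i3 [h01 h12 h23 h3 hR]]]]].
exists i0, i1, i2, i3; split => //; first by rewrite size_cat; lia.
by rewrite !nth_cat (ltn_trans h01 (ltn_trans h12 (ltn_trans h23 h3)))
  (ltn_trans h12 (ltn_trans h23 h3)) (ltn_trans h23 h3) h3.
Qed.

Lemma has4_catr R s t : has4 R t -> has4 R (s ++ t).
Proof.
move=> [i0 [i1 [i2 [i3 [h01 h12 h23 h3 hR]]]]].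
exists (size s + i0), (size s + i1), (size s + i2), (size s + i3); split; try lia.
  by rewrite size_cat; lia.
by rewrite !nth_cat !ltnNge !leq_addr /= !addKn.
Qed.

Lemma has4_map R f l :
  (forall a b c d, a \in l -> b \in l -> c \in l -> d \in l ->
     R (f a) (f b) (f c) (f d) = R a b c d) ->
  has4 R (map f l) <-> has4 R l.
Proof.
move=> hf; split.
- move=> [i0 [i1 [i2 [i3 [h01 h12 h23 h3 hR]]]]].
  rewrite size_map in h3.
  have h2 := ltn_trans h23 h3. have h1 := ltn_trans h12 h2. have h0 := ltn_trans h01 h1.
  exists i0, i1, i2, i3; split => //.
  by rewrite -hf ?mem_nth // -!(nth_map 0 0) ?size_map.
- move=> [i0 [i1 [i2 [i3 [h01 h12 h23 h3 hR]]]]].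
  have h2 := ltn_trans h23 h3. have h1 := ltn_trans h12 h2. have h0 := ltn_trans h01 h1.
  exists i0, i1, i2, i3; split => //; first by rewrite size_map.
  by rewrite !(nth_map 0 0) // hf ?mem_nth.
Qed.

Lemma P2413_mono r f (l : seq nat) a b c d :
  (r = lt' \/ r = gtn') ->
  {in l &, forall x y, (f x < f y) = (x < y)} ->
  a \in l -> b \in l -> c \in l -> d \in l ->
  P2413 r (f a) (f b) (f c) (f d) = P2413 r a b c d.
Proof.
move=> [->|->] hf ha hb hc hd; rewrite /P2413 /gtn' /lt' !hf //.
Qed.

Definition splitb (r : rel nat) (l : seq nat) (i : nat) : bool :=
  (0 < i < size l) && all (fun x => all (r x) (drop i l)) (take i l).

Lemma splitP (r : rel nat) (l : seq nat) i : reflect (0 < i < size l /\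
  forall x y, x \in take i l -> y \in drop i l -> r x y) (splitb r l i).
Proof.
apply: (iffP andP) => [[h /allP H]|[h H]]; split => //.
  by move=> x y hx hy; exact: (allP (H x hx)).
by apply/allP => x hx; apply/allP => y hy; exact: H.
Qed.

Lemma all_take_find (p : pred nat) s : all (predC p) (take (find p s) s).
Proof. by elim: s => //= y s IH; case: ifP => //= ->. Qed.

Lemma step (r : rel nat)
  (rtot : forall x y, x != y -> r x y || r y x)
  (rasym : forall x y, r x y -> ~~ r y x)
  (rtrans : forall x y z, r x y -> r y z -> r x z)
  σ x i : uniq (rcons σ x) -> splitb r σ i ->
  ~ has4 (P2413 (fun a b => r b a)) (rcons σ x) ->
  exists j, splitb r (rcons σ x) j \/ splitb (fun a b => r b a) (rcons σ x) j.
Proof.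
move=> hu /splitP [/andP [hi0 hiσ] hsp] hno.
set A := take i σ; set B := drop i σ.
have hσ : σ = A ++ B by rewrite cat_take_drop.
have hl : rcons σ x = A ++ (B ++ [:: x]) by rewrite -cats1 {1}hσ catA.
have hsA : size A = i by rewrite size_takel // ltnW.
have hB0 : 0 < size B by rewrite size_drop subn_gt0.
have xnσ : x \notin σ by move: hu; rewrite rcons_uniq => /andP[].
have xnA : x \notin A by apply: contra xnσ; apply: mem_take.
case hA: (all (fun a => r a x) A).
  exists i; left; apply/splitP; split.
    by rewrite size_rcons hi0 /= ltnS ltnW.
  rewrite hl take_size_cat // drop_size_cat // => a b ha.
  rewrite mem_cat mem_seq1 => /orP[hb|/eqP->]; first exact: hsp.
  exact: (allP hA).
case hS: (all (fun y => r x y) σ).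
  exists (size σ); right; apply/splitP; split.
    by rewrite size_rcons ltnS leqnn andbT (leq_ltn_trans _ hiσ).
  rewrite -cats1 take_size_cat // drop_size_cat // => a b ha.
  by rewrite mem_seq1 => /eqP->; exact: (allP hS).
have [a2 ha2 hxa2] : exists2 a, a \in A & r x a.
  move/negbT: hA; rewrite -has_predC => /hasP [a ha /= hna]; exists a => //.
  have : a != x by apply: contraNneq xnA => <-.
  by move/rtot; rewrite (negbTE hna).
have [y hy hyx] : exists2 y, y \in σ & r y x.
  move/negbT: hS; rewrite -has_predC => /hasP [a ha /= hna]; exists a => //.
  have : x != a by apply: contraNneq xnσ => ->.
  by move/rtot; rewrite (negbTE hna).
have hhas : has (r x) A by apply/hasP; exists a2.
set j := find (r x) A.
have hjA : j < size A by rewrite -has_find.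
have htj : forall z, z \in take j A -> r z x.
  move=> z hz; have /= hnz := allP (all_take_find (r x) A) z hz.
  have zx : z != x by apply: contraNneq xnA => <-; exact: mem_take hz.
  by move: (rtot _ _ zx); rewrite (negbTE hnz) orbF.
case hD: (has (fun a => r a x) (drop j A)).
  exfalso; apply: hno.
  set q := find (fun a => r a x) (drop j A).
  have hq : q < size (drop j A) by rewrite -has_find.
  have hfq := nth_find 0 hD; rewrite -/q nth_drop in hfq.
  have hfj := nth_find 0 hhas; rewrite -/j in hfj.
  have hq0 : 0 < q.
    rewrite lt0n; apply/eqP=> q0; move: hfq; rewrite q0 addn0 => hrx.
    by move: (rasym _ _ hfj); rewrite hrx.
  rewrite size_drop hsA in hq.
  have hji : j < i by rewrite -hsA.
  have hjq : j + q < i by rewrite -ltn_subRL.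
  exists j, (j + q), i, (size σ); split.
  - by rewrite -{1}(addn0 j) ltn_add2l.
  - exact: hjq.
  - exact: hiσ.
  - by rewrite size_rcons.
  rewrite !nth_rcons !ltnn eqxx hiσ (ltn_trans hjq hiσ).
  rewrite (ltn_trans hji) //.
  have e1 : nth 0 σ j = nth 0 A j by rewrite nth_take // -hsA.
  have e2 : nth 0 σ (j + q) = nth 0 A (j + q) by rewrite nth_take.
  have e3 : nth 0 σ i = nth 0 B 0 by rewrite nth_drop addn0.
  rewrite e1 e2 e3 /P2413 hfq hfj andbT /=.
  rewrite (hsp _ _ (mem_nth 0 hjA) (mem_nth 0 hB0)).
  by [].
exists j; left; apply/splitP; split.
  apply/andP; split; last by rewrite size_rcons ltnS ltnW // (leq_trans hjA) // hsA ltnW.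
  have yA : y \in A.
    move: hy; rewrite hσ mem_cat => /orP[//|hyB].
    by move: (rasym _ _ hyx); rewrite (rtrans _ _ _ hxa2 (hsp _ _ ha2 hyB)).
  move: yA; rewrite -(cat_take_drop j A) mem_cat => /orP[hyt|hyd].
    by rewrite lt0n; apply/eqP => j0; move: hyt; rewrite j0 take0.
  by move/hasPn: (negbT hD) => /(_ y hyd); rewrite hyx.
rewrite hl takel_cat ?(ltnW hjA) // drop_cat hjA => a b ha.
rewrite !mem_cat mem_seq1 => /or3P[hb|hb|/eqP->]; last exact: htj.
- have hnb : ~~ r b x by move/hasPn: (negbT hD) => /(_ b hb).
  have bx : b != x by apply: contraNneq xnA => <-; exact: mem_drop hb.
  have hxb : r x b by move: (rtot _ _ bx); rewrite (negbTE hnb).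
  exact: rtrans _ _ _ (htj a ha) hxb.
- by apply: hsp => //; exact: mem_take ha.
Qed.

Lemma lt'_tot x y : x != y -> lt' x y || lt' y x.
Proof. by rewrite neq_ltn. Qed.
Lemma lt'_asym x y : lt' x y -> ~~ lt' y x.
Proof. by rewrite /lt' -leqNgt => /ltnW. Qed.
Lemma lt'_trans x y z : lt' x y -> lt' y z -> lt' x z.
Proof. exact: ltn_trans. Qed.
Lemma gt'_tot x y : x != y -> gtn' x y || gtn' y x.
Proof. by rewrite neq_ltn orbC. Qed.
Lemma gt'_asym x y : gtn' x y -> ~~ gtn' y x.
Proof. by rewrite /gtn' -leqNgt => /ltnW. Qed.
Lemma gt'_trans x y z : gtn' x y -> gtn' y z -> gtn' x z.
Proof. by rewrite /gtn' => h1 h2; exact: ltn_trans h2 h1. Qed.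

Lemma key (l : seq nat) : uniq l -> 1 < size l ->
  ~ has4 (P2413 lt') l -> ~ has4 (P2413 gtn') l ->
  exists j, splitb lt' l j \/ splitb gtn' l j.
Proof.
elim/last_ind: l => [|σ x IH] // hu hs h1 h2.
have huσ : uniq σ by move: hu; rewrite rcons_uniq => /andP[].
have h1σ : ~ has4 (P2413 lt') σ by move=> h; apply: h1; rewrite -cats1; exact: has4_catl.
have h2σ : ~ has4 (P2413 gtn') σ by move=> h; apply: h2; rewrite -cats1; exact: has4_catl.
case: (ltnP 1 (size σ)) => hsσ.
  have [j [hj|hj]] := IH huσ hsσ h1σ h2σ.
    have [k [hk|hk]] := step lt'_tot lt'_asym lt'_trans hu hj h2.
      by exists k; left.
    by exists k; right.
  have [k [hk|hk]] := step gt'_tot gt'_asym gt'_trans hu hj h1.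
    by exists k; right.
  by exists k; left.
move: hs hu; rewrite size_rcons ltnS; clear IH huσ h1σ h2σ h1 h2; case: σ hsσ => [|y [|z s]] //= _ _.
rewrite inE andbT => hyx.
exists 1; rewrite /splitb /= /lt' /gtn' !andbT.
by move: hyx; rewrite neq_ltn => /orP[]; [left|right].
Qed.

Definition psum (a b : seq nat) := a ++ map (addn (size a)) b.
Definition pskew (a b : seq nat) := map (addn (size b)) a ++ b.
Fixpoint ptree (T : tree) : seq nat :=
  match T with
  | Leaf => [:: 0]
  | Node s L R => if s then psum (ptree R) (ptree L) else pskew (ptree R) (ptree L)
  end.
Definition isperm (l : seq nat) := perm_eq l (iota 0 (size l)).

Lemma isperm_lt (l : seq nat) x : isperm l -> x \in l -> x < size l.
Proof. by move=> /perm_mem -> ; rewrite mem_iota. Qed.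

Lemma isperm_uniq (l : seq nat) : isperm l -> uniq l.
Proof. by move=> /perm_uniq ->; exact: iota_uniq. Qed.

Lemma isperm_intro (l : seq nat) : uniq l -> (forall x, x \in l -> x < size l) -> isperm l.
Proof.
move=> hu hl; apply: uniq_perm => //; first exact: iota_uniq.
have hsub : {subset l <= iota 0 (size l)} by move=> x hx; rewrite mem_iota /= hl.
by have [_ h] := uniq_min_size hu hsub (eq_leq (size_iota _ _)).
Qed.

Lemma isperm_shift (s : seq nat) a : uniq s -> (forall x, x \in s -> a <= x < a + size s) ->
  isperm (map (subn^~ a) s).
Proof.
move=> hu hs; apply: isperm_intro.
  rewrite map_inj_in_uniq // => x y hx hy /= e.
  have /andP[h1 _] := hs x hx; have /andP[h2 _] := hs y hy.
  by rewrite -(subnK h1) -(subnK h2) e.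
move=> z /mapP [x hx ->]; rewrite size_map /=; have := hs x hx. lia.
Qed.

Lemma isperm_psum a b : isperm a -> isperm b -> isperm (psum a b).
Proof.
rewrite /isperm /psum size_cat size_map iotaD add0n => ha hb.
by rewrite perm_cat // -[size a]addn0 iotaDl addn0; apply: perm_map.
Qed.

Lemma isperm_pskew a b : isperm a -> isperm b -> isperm (pskew a b).
Proof.
rewrite /isperm /pskew size_cat size_map => ha hb.
rewrite addnC iotaD add0n perm_catC perm_cat // -[size b]addn0 iotaDl addn0.
exact: perm_map.
Qed.

Lemma ptree_props T : isperm (ptree T) /\ size (ptree T) = (nnodes T).+1.
Proof.
elim: T => [|s L [pL sL] R [pR sR]] /=; first by [].
case: s; split.
- exact: isperm_psum.
- by rewrite /psum size_cat size_map sL sR; lia.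
- exact: isperm_pskew.
- by rewrite /pskew size_cat size_map sL sR; lia.
Qed.

Fixpoint desR (s : seq nat) : nat :=
  if s is x :: t then (if t is y :: _ then (y < x) + desR t else 0) else 0.

Lemma desR_cat s t : s != [::] -> t != [::] ->
  desR (s ++ t) = desR s + desR t + (head 0 t < last 0 s).
Proof.
elim: s => [|x [|y s] IH] // _ ht.
  by clear IH; case: t ht => [|z t] //= _; rewrite addnC.
have -> : desR ((x :: y :: s) ++ t) = (y < x) + desR ((y :: s) ++ t) by [].
rewrite IH //.
have -> : desR (x :: y :: s) = (y < x) + desR (y :: s) by [].
have -> : last 0 [:: x, y & s] = last 0 (y :: s) by [].
by rewrite !addnA.
Qed.

Lemma desR_map f s : {in s &, forall x y, (f x < f y) = (x < y)} ->
  desR (map f s) = desR s.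
Proof.
elim: s => [|x [|y s] IH] //= hf.
rewrite hf ?inE ?eqxx ?orbT //; congr (_ + _).
by apply: IH => a b ha hb; apply: hf; rewrite inE ?ha ?hb orbT.
Qed.

Fixpoint negs (T : tree) : nat :=
  match T with Leaf => 0 | Node a L R => (~~ a) + negs L + negs R end.

Lemma last_mem0 (s : seq nat) : s != [::] -> last 0 s \in s.
Proof. by case: s => // x s _; exact: mem_last. Qed.
Lemma head_mem0 (s : seq nat) : s != [::] -> head 0 s \in s.
Proof. by case: s => // x s _; rewrite inE eqxx. Qed.

Lemma size_ptree_neq0 T : ptree T != [::].
Proof. by rewrite -size_eq0 (proj2 (ptree_props T)). Qed.

Lemma desR_ptree T : desR (ptree T) = negs T.
Proof.
elim: T => [|s L IL R IR] //=.
have [pL sL] := ptree_props L; have [pR sR] := ptree_props R.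
have nL := size_ptree_neq0 L; have nR := size_ptree_neq0 R.
case: s => /=.
  rewrite /psum desR_cat //; last by rewrite -size_eq0 size_map size_eq0.
  rewrite desR_map; last by move=> x y _ _; rewrite ltn_add2l.
  have hl := isperm_lt pR (last_mem0 nR).
  have -> : (head 0 (map (addn (size (ptree R))) (ptree L)) < last 0 (ptree R)) = false.
    by case: (ptree L) nL => // z t _ /=; apply/negbTE; rewrite -leqNgt; lia.
  by rewrite IL IR; lia.
rewrite /pskew desR_cat //; last by rewrite -size_eq0 size_map size_eq0.
rewrite desR_map; last by move=> x y _ _; rewrite ltn_add2l.
have hl := isperm_lt pL (head_mem0 nL).
have -> : (head 0 (ptree L) < last 0 (map (addn (size (ptree L))) (ptree R))) = true.
  case: (ptree R) nR => // z t _ /=; rewrite (last_map (addn _) t z).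
  by apply: leq_trans hl _; rewrite leq_addr.
by rewrite IL IR; lia.
Qed.

Lemma fin4 (r sep : rel nat) v0 v1 v2 v3 : (r = lt' \/ r = gtn') -> (sep = lt' \/ sep = gtn') ->
  P2413 r v0 v1 v2 v3 -> sep v0 v3 ->
  (sep v1 v3 /\ (sep v2 v3 \/ (sep v0 v2 /\ sep v1 v2))) \/ (sep v0 v1 /\ sep v0 v2) -> False.
Proof.
by move=> [->|->] [->|->]; rewrite /P2413 /lt' /gtn' => /and3P[h1 h2 h3] h4 h5; lia.
Qed.

Lemma has4_cat_sep (r sep : rel nat) (a c : seq nat) :
  (r = lt' \/ r = gtn') -> (sep = lt' \/ sep = gtn') ->
  (forall x y, x \in a -> y \in c -> sep x y) ->
  has4 (P2413 r) (a ++ c) -> has4 (P2413 r) a \/ has4 (P2413 r) c.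
Proof.
move=> hr hs hsep [i0 [i1 [i2 [i3 [h01 h12 h23 h3 hR]]]]].
case: (ltnP i3 (size a)) => h3a.
  have h2a := ltn_trans h23 h3a. have h1a := ltn_trans h12 h2a.
  have h0a := ltn_trans h01 h1a.
  left; exists i0, i1, i2, i3; split => //.
  by rewrite !nth_cat h0a h1a h2a h3a in hR.
case: (leqP (size a) i0) => h0a.
  right; exists (i0 - size a), (i1 - size a), (i2 - size a), (i3 - size a).
  rewrite size_cat in h3.
  split; try lia.
  have h1a : size a <= i1 by lia. have h2a : size a <= i2 by lia.
  by rewrite !nth_cat !ltnNge h0a h1a h2a h3a in hR.
exfalso.
have hin : forall k, k < size (a ++ c) -> k < size a -> nth 0 (a ++ c) k \in a.
  by move=> k _ hk; rewrite nth_cat hk mem_nth.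
have hic : forall k, k < size (a ++ c) -> size a <= k -> nth 0 (a ++ c) k \in c.
  move=> k hk hk'; rewrite nth_cat ltnNge hk' /=; apply: mem_nth.
  by rewrite size_cat in hk; rewrite ltn_subLR.
have h2 := ltn_trans h23 h3. have h1 := ltn_trans h12 h2. have h0 := ltn_trans h01 h1.
apply: (fin4 hr hs hR (hsep _ _ (hin _ h0 h0a) (hic _ h3 h3a))).
case: (ltnP i1 (size a)) => h1a.
  left; split; first exact: hsep (hin _ h1 h1a) (hic _ h3 h3a).
  case: (ltnP i2 (size a)) => h2a.
    by left; exact: hsep (hin _ h2 h2a) (hic _ h3 h3a).
  by right; split; apply: hsep; rewrite ?hin ?hic //; apply: ltn_trans h01 h1a.
right; have h2a : size a <= i2 by apply: leq_trans h1a (ltnW h12).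
by split; apply: hsep; rewrite ?hin ?hic.
Qed.

Definition sepL (l : seq nat) := ~ has4 (P2413 lt') l /\ ~ has4 (P2413 gtn') l.

Lemma sep_cat (sep : rel nat) (a c : seq nat) : (sep = lt' \/ sep = gtn') ->
  (forall x y, x \in a -> y \in c -> sep x y) -> sepL a -> sepL c -> sepL (a ++ c).
Proof.
move=> hs hsep [a1 a2] [c1 c2]; split.
  by move/(has4_cat_sep (or_introl erefl) hs hsep) => [].
by move/(has4_cat_sep (or_intror erefl) hs hsep) => [].
Qed.

Lemma sep_map f (l : seq nat) : {in l &, forall x y, (f x < f y) = (x < y)} ->
  sepL (map f l) <-> sepL l.
Proof.
move=> hf.
have e1 := has4_map (fun a b c d ha hb hc hd =>
  P2413_mono (r := lt') (or_introl erefl) hf ha hb hc hd).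
have e2 := has4_map (fun a b c d ha hb hc hd =>
  P2413_mono (r := gtn') (or_intror erefl) hf ha hb hc hd).
by rewrite /sepL e1 e2.
Qed.

Lemma sep_psum (a b : seq nat) : isperm a -> sepL a -> sepL b -> sepL (psum a b).
Proof.
move=> pa sa sb; apply: (sep_cat (sep := lt')) => //; first by left.
  move=> x y hx /mapP [z _ ->]; rewrite /lt'.
  by apply: leq_trans (isperm_lt pa hx) _; rewrite leq_addr.
by apply/sep_map => // x y _ _; rewrite ltn_add2l.
Qed.

Lemma sep_pskew (a b : seq nat) : isperm b -> sepL a -> sepL b -> sepL (pskew a b).
Proof.
move=> pb sa sb; apply: (sep_cat (sep := gtn')) => //; first by right.
  move=> x y /mapP [z _ ->] hy; rewrite /gtn'.
  by apply: leq_trans (isperm_lt pb hy) _; rewrite leq_addr.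
by apply/sep_map => // x y _ _; rewrite ltn_add2l.
Qed.

Lemma sep_ptree T : sepL (ptree T).
Proof.
elim: T => [|s L IL R IR] /=.
  by split; move=> [i0 [i1 [i2 [i3 [h01 h12 h23 h3 _]]]]]; rewrite /= in h3; lia.
have [pL _] := ptree_props L; have [pR _] := ptree_props R.
by case: s; [exact: sep_psum | exact: sep_pskew].
Qed.

Lemma sep_take (l : seq nat) i : sepL l -> sepL (take i l).
Proof.
by move=> [h1 h2]; split => h; [apply: h1 | apply: h2];
  rewrite -(cat_take_drop i l); exact: has4_catl.
Qed.

Lemma sep_drop (l : seq nat) i : sepL l -> sepL (drop i l).
Proof.
by move=> [h1 h2]; split => h; [apply: h1 | apply: h2];
  rewrite -(cat_take_drop i l); exact: has4_catr.
Qed.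

Lemma last_in_drop (l : seq nat) i : i < size l -> last 0 l \in drop i l.
Proof.
move=> hi; rewrite -{1}(cat_take_drop i l) last_cat.
have : 0 < size (drop i l) by rewrite size_drop subn_gt0.
by case: (drop i l) => // z s _; exact: mem_last.
Qed.

Lemma head_in_take (l : seq nat) i : 0 < i -> 0 < size l -> head 0 l \in take i l.
Proof. by case: l => // z s; case: i => // i _ _; rewrite /= inE eqxx. Qed.

Lemma nosplit_both (l : seq nat) i j : splitb lt' l i -> splitb gtn' l j -> False.
Proof.
move=> /splitP [/andP[hi0 hil] h1] /splitP [/andP[hj0 hjl] h2].
have hl : 0 < size l by apply: ltn_trans hi0 hil.
have := h1 _ _ (head_in_take hi0 hl) (last_in_drop hil).
have := h2 _ _ (head_in_take hj0 hl) (last_in_drop hjl).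
rewrite /lt' /gtn'; lia.
Qed.

Lemma psum_split (a b : seq nat) : isperm a -> 0 < size a -> 0 < size b ->
  splitb lt' (psum a b) (size a).
Proof.
move=> pa ha hb; apply/splitP; split.
  by rewrite ha size_cat size_map -{1}(addn0 (size a)) ltn_add2l.
rewrite /psum take_size_cat // drop_size_cat // => x y hx /mapP [z _ ->].
by rewrite /lt'; apply: leq_trans (isperm_lt pa hx) _; rewrite leq_addr.
Qed.

Lemma pskew_split (a b : seq nat) : isperm b -> 0 < size a -> 0 < size b ->
  splitb gtn' (pskew a b) (size a).
Proof.
move=> pb ha hb; apply/splitP; split.
  by rewrite ha size_cat size_map -{1}(addn0 (size a)) ltn_add2l.
rewrite /pskew take_size_cat ?size_map // drop_size_cat ?size_map //.
move=> x y /mapP [z _ ->] hy.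
by rewrite /gtn'; apply: leq_trans (isperm_lt pb hy) _; rewrite leq_addr.
Qed.

Lemma split_take (r : rel nat) (l : seq nat) i i' :
  splitb r (take i l) i' -> splitb r l i -> splitb r l i'.
Proof.
move=> /splitP [/andP[h0 h1] H1] /splitP [/andP[g0 g1] H2].
have hsz : size (take i l) = i by rewrite size_takel // ltnW.
rewrite hsz in h1.
apply/splitP; split; first by rewrite h0 (ltn_trans h1 g1).
move=> x y hx hy.
have hx' : x \in take i' (take i l) by rewrite take_takel // ltnW.
move: hy; rewrite -{1}(cat_take_drop i l) drop_cat hsz h1 mem_cat => /orP[hy|hy].
  exact: H1.
by apply: H2 => //; exact: mem_take hx'.
Qed.

Lemma split_restrict (r : rel nat) (l : seq nat) i k :
  splitb r l i -> i < k -> splitb r (take k l) i.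
Proof.
move=> /splitP [/andP[h0 h1] H] hk.
apply/splitP; split.
  by rewrite h0 size_take; case: ifP.
move=> x y; rewrite take_takel ?(ltnW hk) // => hx.
rewrite -{1}(subnK (ltnW hk)) -take_drop => hy.
exact: H hx (mem_take hy).
Qed.

Fixpoint good (T : tree) : bool :=
  match T with
  | Leaf => true
  | Node a L R => [&& good L, good R & (if R is Node b _ _ then a != b else true)]
  end.

Lemma chains_true T : chains true T =
  (if T is Node _ _ _ then [:: spine T] else [::]) ++ chains false T.
Proof. by case: T. Qed.

Lemma all_chains_true (P : pred (seq bool)) T :
  all P (chains true T) = (if T is Node _ _ _ then P (spine T) else true) && all P (chains false T).
Proof. by rewrite chains_true; case: T. Qed.

Lemma good_chains T :
  all (fun c => sorted (fun a b : bool => a != b) c) (chains false T) &&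
  sorted (fun a b : bool => a != b) (spine T) = good T.
Proof.
elim: T => [|a L IL R IR] //=.
rewrite all_cat all_chains_true -IL -IR.
case: R {IR} => [|b L' R'] /=; case: L {IL} => [|c L'' R''] /=.
all: by repeat (first [case: (path _ _ _) | case: (all _ _) | case: (_ != _)]).
Qed.

Lemma is_disk_good T : is_disk T = good T.
Proof.
rewrite /is_disk /right_chains all_chains_true -good_chains.
by case: T => //= a L R; rewrite andbC.
Qed.

Lemma pigeon (s : seq nat) lo hi : uniq s -> (forall y, y \in s -> lo < y < hi) ->
  size s <= hi - lo.+1.
Proof.
move=> hu hs.
have : {subset s <= iota lo.+1 (hi - lo.+1)}.
  by move=> y hy; rewrite mem_iota; have := hs y hy; lia.
by move/(uniq_leq_size hu); rewrite size_iota.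
Qed.

Lemma split_vals_lt (l : seq nat) i : isperm l -> splitb lt' l i ->
  (forall x, x \in take i l -> x < i) /\ (forall y, y \in drop i l -> i <= y).
Proof.
move=> pl /splitP [/andP [hi0 hil] H].
have hu := isperm_uniq pl.
have h1 : forall x, x \in take i l -> x < i.
  move=> x hx; rewrite ltnNge; apply/negP => hxi.
  have hx' := isperm_lt pl (mem_take hx).
  have := pigeon (drop_uniq i hu) (fun y hy => introT andP (conj (H x y hx hy) (isperm_lt pl (mem_drop hy)))).
  rewrite size_drop; lia.
split => // y hy; rewrite leqNgt; apply/negP => hyi.
have hsub : {subset take i l <= iota 0 i} by move=> x hx; rewrite mem_iota /= h1.
have hsz : size (iota 0 i) <= size (take i l) by rewrite size_iota size_takel // ltnW.
have [_ e] := uniq_min_size (take_uniq i hu) hsub hsz.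
move: hu; rewrite -(cat_take_drop i l) cat_uniq => /and3P [_ /hasPn /(_ y hy) /negP[]].
by rewrite /= e mem_iota.
Qed.

Lemma split_vals_gt (l : seq nat) i : isperm l -> splitb gtn' l i ->
  (forall x, x \in take i l -> size l - i <= x) /\ (forall y, y \in drop i l -> y < size l - i).
Proof.
move=> pl /splitP [/andP [hi0 hil] H].
have hu := isperm_uniq pl.
have h2 : forall y, y \in drop i l -> y < size l - i.
  move=> y hy; rewrite ltnNge; apply/negP => hyi.
  have hy' := isperm_lt pl (mem_drop hy).
  have := pigeon (take_uniq i hu) (fun x hx => introT andP (conj (H x y hx hy) (isperm_lt pl (mem_take hx)))).
  rewrite size_takel ?(ltnW hil) //; lia.
split => // x hx; rewrite leqNgt; apply/negP => hxi.
have hsub : {subset drop i l <= iota 0 (size l - i)} by move=> y hy; rewrite mem_iota /= h2.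
have hsz : size (iota 0 (size l - i)) <= size (drop i l) by rewrite size_iota size_drop.
have [_ e] := uniq_min_size (drop_uniq i hu) hsub hsz.
move: hu; rewrite -(cat_take_drop i l) cat_uniq => /and3P [_ /hasPn H' _].
have : x \in drop i l by rewrite e mem_iota.
by move/H'; rewrite /= hx.
Qed.

Lemma split_map (r : rel nat) f (s : seq nat) i : (r = lt' \/ r = gtn') ->
  {in s &, forall x y, (f x < f y) = (x < y)} ->
  splitb r (map f s) i = splitb r s i.
Proof.
move=> hr hf; apply/splitP/splitP; rewrite size_map => -[h H]; split => // x y.
  move=> hx hy; have := H (f x) (f y).
  rewrite -map_take -map_drop !map_f // => /(_ isT isT).
  by case: hr => ->; rewrite /lt' /gtn' hf ?(mem_take hx) ?(mem_drop hy).
rewrite -map_take -map_drop => /mapP [x' hx' ->] /mapP [y' hy' ->].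
by case: hr H => -> H; rewrite /lt' /gtn' hf ?(mem_take hx') ?(mem_drop hy') //; apply: H.
Qed.

Lemma no_split_right a L R : good (Node a L R) ->
  forall i, ~~ splitb (if a then lt' else gtn') (ptree R) i.
Proof.
move=> /and3P [_ gR hab] i; apply/negP.
case: R gR hab => [|b L' R'] /=.
  by move=> _ _ /splitP [/andP [h1 h2] _]; move: h2; rewrite /= ltnS leqn0 => /eqP h; rewrite h in h1.
have [pL' sL'] := ptree_props L'; have [pR' sR'] := ptree_props R'.
case: a; case: b => // _ _ hs.
  apply: (nosplit_both hs (pskew_split _ _ _)) => //; rewrite ?sR' ?sL' //.
apply: (nosplit_both (psum_split _ _ _) hs) => //; rewrite ?sR' ?sL' //.
Qed.

Lemma same_split (r : rel nat) (l : seq nat) n1 n2 : splitb r l n1 -> splitb r l n2 ->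
  (forall i, ~~ splitb r (take n1 l) i) -> (forall i, ~~ splitb r (take n2 l) i) -> n1 = n2.
Proof.
move=> h1 h2 H1 H2; case: (ltngtP n1 n2) => // h.
  by move: (H2 n1); rewrite (split_restrict h1 h).
by move: (H1 n2); rewrite (split_restrict h2 h).
Qed.

Lemma ptree_inj T1 T2 : good T1 -> good T2 -> ptree T1 = ptree T2 -> T1 = T2.
Proof.
elim: T1 T2 => [|a L IL R IR] [|b L2 R2] //.
- by move=> _ _ /(congr1 size); rewrite (proj2 (ptree_props (Node _ _ _))).
- by move=> _ _ /(congr1 size); rewrite (proj2 (ptree_props (Node _ _ _))).
move=> g1 g2 e.
have [pL sL] := ptree_props L; have [pR sR] := ptree_props R.
have [pL2 sL2] := ptree_props L2; have [pR2 sR2] := ptree_props R2.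
have /and3P [gL gR _] := g1.
have /and3P [gL2 gR2 _] := g2.
have n1 := no_split_right g1; have n2 := no_split_right g2.
case: a b e g1 g2 n1 n2 => [] [] /= e g1 g2 n1 n2.
- have s1 : splitb lt' (ptree (Node true L R)) (size (ptree R)).
    by apply: psum_split; rewrite ?sL ?sR.
  have s2 : splitb lt' (ptree (Node true L R)) (size (ptree R2)).
    by rewrite /= e; apply: psum_split; rewrite ?sL2 ?sR2.
  have t1 : take (size (ptree R)) (ptree (Node true L R)) = ptree R by rewrite /= /psum take_size_cat.
  have t2 : take (size (ptree R2)) (ptree (Node true L R)) = ptree R2 by rewrite /= e /psum take_size_cat.
  have h1 : forall i, ~~ splitb lt' (take (size (ptree R)) (ptree (Node true L R))) i by rewrite t1.
  have h2 : forall i, ~~ splitb lt' (take (size (ptree R2)) (ptree (Node true L R))) i by rewrite t2.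
  have hs := same_split s1 s2 h1 h2.
  have eR : ptree R = ptree R2 by rewrite -t1 -t2 hs.
  have eL : ptree L = ptree L2.
    move: e; rewrite /psum eR => /(congr1 (drop (size (ptree R2)))).
    rewrite !drop_size_cat //; exact: (inj_map (@addnI (size (ptree R2)))).
  by rewrite (IL L2 gL gL2 eL) (IR R2 gR gR2 eR).
- exfalso.
  have s1 : splitb lt' (psum (ptree R) (ptree L)) (size (ptree R)).
    by apply: psum_split; rewrite ?sL ?sR.
  have s2 : splitb gtn' (pskew (ptree R2) (ptree L2)) (size (ptree R2)).
    by apply: pskew_split; rewrite ?sL2 ?sR2.
  rewrite -e in s2; exact: nosplit_both s1 s2.
- exfalso.
  have s1 : splitb lt' (psum (ptree R2) (ptree L2)) (size (ptree R2)).
    by apply: psum_split; rewrite ?sL2 ?sR2.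
  have s2 : splitb gtn' (pskew (ptree R) (ptree L)) (size (ptree R)).
    by apply: pskew_split; rewrite ?sL ?sR.
  rewrite e in s2; exact: nosplit_both s1 s2.
- have s1 : splitb gtn' (ptree (Node false L R)) (size (ptree R)).
    by apply: pskew_split; rewrite ?sL ?sR.
  have s2 : splitb gtn' (ptree (Node false L R)) (size (ptree R2)).
    by rewrite /= e; apply: pskew_split; rewrite ?sL2 ?sR2.
  have t1 : take (size (ptree R)) (ptree (Node false L R)) = map (addn (size (ptree L))) (ptree R)
    by rewrite /= /pskew take_size_cat ?size_map.
  have t2 : take (size (ptree R2)) (ptree (Node false L R)) = map (addn (size (ptree L2))) (ptree R2)
    by rewrite /= e /pskew take_size_cat ?size_map.
  have mono : forall k (s : seq nat), {in s &, forall x y, (addn k x < addn k y) = (x < y)}.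
    by move=> k s x y _ _; rewrite ltn_add2l.
  have h1 : forall i, ~~ splitb gtn' (take (size (ptree R)) (ptree (Node false L R))) i.
    by rewrite t1 => i; rewrite split_map //; right.
  have h2 : forall i, ~~ splitb gtn' (take (size (ptree R2)) (ptree (Node false L R))) i.
    by rewrite t2 => i; rewrite split_map //; right.
  have hs := same_split s1 s2 h1 h2.
  have eL : ptree L = ptree L2.
    move: e; rewrite /pskew => /(congr1 (drop (size (ptree R)))).
    by rewrite drop_size_cat ?size_map // hs drop_size_cat ?size_map.
  have eR : ptree R = ptree R2.
    move: e; rewrite /pskew => /(congr1 (take (size (ptree R)))).
    rewrite take_size_cat ?size_map // hs take_size_cat ?size_map // eL.
    exact: (inj_map (@addnI (size (ptree L2)))).
  by rewrite (IL L2 gL gL2 eL) (IR R2 gR gR2 eR).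
Qed.

Lemma find_split (r : rel nat) (l : seq nat) : (exists j, splitb r l j) ->
  splitb r l (find (splitb r l) (iota 0 (size l))) /\
  forall i', i' < find (splitb r l) (iota 0 (size l)) -> ~~ splitb r l i'.
Proof.
move=> [j hj].
have hhas : has (splitb r l) (iota 0 (size l)).
  apply/hasP; exists j => //; rewrite mem_iota /=.
  by move/splitP: hj => [/andP [_ ->] _].
have hi : find (splitb r l) (iota 0 (size l)) < size l.
  by move: hhas; rewrite has_find size_iota.
split.
  by have := nth_find 0 hhas; rewrite nth_iota.
move=> i' hi'; have := before_find 0 hi'; rewrite nth_iota ?add0n => [->//|].
exact: ltn_trans hi' hi.
Qed.

Definition surjP m := forall l : seq nat, size l = m.+1 -> isperm l -> sepL l ->
  exists T, [/\ good T, nnodes T = m & ptree T = l].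

Lemma surj_sum m (IH : forall m', m' < m -> surjP m') (l : seq nat) :
  size l = m.+1 -> isperm l -> sepL l -> (exists j, splitb lt' l j) ->
  exists T, [/\ good T, nnodes T = m & ptree T = l].
Proof.
move=> hs pl sl hj.
have [hsi hmin] := find_split hj.
move: hsi hmin; set i := find _ _ => hsi hmin.
have /splitP [/andP [hi0 hil] _] := hsi.
have [v1 v2] := split_vals_lt pl hsi.
have hu := isperm_uniq pl.
set pR := take i l; set pL := map (subn^~ i) (drop i l).
have szR : size pR = i := size_takel (ltnW hil).
have szL : size pL = size l - i by rewrite size_map size_drop.
have ppR : isperm pR.
  by apply: isperm_intro; [exact: take_uniq | move=> x hx; rewrite szR; exact: v1].
have ppL : isperm pL.
  apply: isperm_shift; first exact: drop_uniq.
  move=> y hy; rewrite v2 //= size_drop subnKC ?(ltnW hil) //.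
  exact: isperm_lt pl (mem_drop hy).
have spR : sepL pR := sep_take i sl.
have spL : sepL pL.
  apply/sep_map; last exact: sep_drop.
  by move=> x y hx hy; rewrite ltn_sub2rE // v2.
have hi1 : i.-1 < m by rewrite -ltnS prednK // -hs.
have hszR : size pR = (i.-1).+1 by rewrite szR prednK.
have [R [gR nR eR]] := IH _ hi1 pR hszR ppR spR.
have hi2 : m - i < m by rewrite ltn_subrL hi0 /=; rewrite hs ltnS in hil; exact: leq_trans hi0 hil.
have hszL : size pL = (m - i).+1 by rewrite szL hs subSn // -ltnS -hs.
have [L [gL nL eL]] := IH _ hi2 pL hszL ppL spL.
exists (Node true L R); split.
- rewrite /= gL gR /=.
  case: R gR nR eR => [|b L' R'] // gR' nR' eR'.
  case: b gR' eR' nR' => // gR' eR' _.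
  have [pL' sL'] := ptree_props L'; have [pR' sR'] := ptree_props R'.
  have hsp : splitb lt' (take i l) (size (ptree R')).
    by rewrite -/pR -eR' /=; apply: psum_split; rewrite ?sR' ?sL'.
  have hlt : size (ptree R') < i.
    by rewrite -szR -eR' /= /psum size_cat size_map sL' -{1}(addn0 (size _)) ltn_add2l.
  by move: (hmin _ hlt); rewrite (split_take hsp hsi).
- rewrite /= nL nR; rewrite hs in hil; lia.
- rewrite /= eL eR /psum szR.
  transitivity (take i l ++ drop i l); last exact: cat_take_drop.
  congr (_ ++ _); rewrite -map_comp -[RHS]map_id.
  by apply/eq_in_map => y hy /=; rewrite subnKC // v2.
Qed.

Lemma surj_skew m (IH : forall m', m' < m -> surjP m') (l : seq nat) :
  size l = m.+1 -> isperm l -> sepL l -> (exists j, splitb gtn' l j) ->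
  exists T, [/\ good T, nnodes T = m & ptree T = l].
Proof.
move=> hs pl sl hj.
have [hsi hmin] := find_split hj.
move: hsi hmin; set i := find _ _ => hsi hmin.
have /splitP [/andP [hi0 hil] _] := hsi.
have [v1 v2] := split_vals_gt pl hsi.
have hu := isperm_uniq pl.
set n := size l in v1 v2 hil.
set pR := map (subn^~ (n - i)) (take i l); set pL := drop i l.
have szR : size pR = i by rewrite size_map size_takel // ltnW.
have szL : size pL = n - i by rewrite size_drop.
have ppR : isperm pR.
  apply: isperm_shift; first exact: take_uniq.
  move=> x hx; rewrite v1 //= size_takel ?(ltnW hil) // subnK ?(ltnW hil) //.
  exact: isperm_lt pl (mem_take hx).
have ppL : isperm pL.
  by apply: isperm_intro; [exact: drop_uniq | move=> y hy; rewrite szL; exact: v2].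
have spL : sepL pL := sep_drop i sl.
have spR : sepL pR.
  apply/sep_map; last exact: sep_take.
  by move=> x y hx hy; rewrite ltn_sub2rE // v1.
have hi1 : i.-1 < m by rewrite -ltnS prednK // -hs.
have hszR : size pR = (i.-1).+1 by rewrite szR prednK.
have [R [gR nR eR]] := IH _ hi1 pR hszR ppR spR.
have hi2 : m - i < m by rewrite ltn_subrL hi0 /=; rewrite /n hs ltnS in hil; exact: leq_trans hi0 hil.
have hszL : size pL = (m - i).+1 by rewrite szL /n hs subSn // -ltnS -hs.
have [L [gL nL eL]] := IH _ hi2 pL hszL ppL spL.
exists (Node false L R); split.
- rewrite /= gL gR /=.
  case: R gR nR eR => [|b L' R'] // gR' nR' eR'.
  case: b gR' eR' nR' => // gR' eR' _.
  have [pL' sL'] := ptree_props L'; have [pR' sR'] := ptree_props R'.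
  have hsp : splitb gtn' pR (size (ptree R')).
    by rewrite -eR' /=; apply: pskew_split; rewrite ?sR' ?sL'.
  rewrite /pR split_map in hsp; last 2 first.
  + by right.
  + by move=> x y hx hy; rewrite ltn_sub2rE // v1.
  have hlt : size (ptree R') < i.
    by rewrite -szR -eR' /= /pskew size_cat size_map sL' -{1}(addn0 (size _)) ltn_add2l.
  by move: (hmin _ hlt); rewrite (split_take hsp hsi).
- rewrite /= nL nR; rewrite /n hs in hil; lia.
- rewrite /= eL eR /pskew szL.
  transitivity (take i l ++ drop i l); last exact: cat_take_drop.
  congr (_ ++ _); rewrite -map_comp -[RHS]map_id.
  by apply/eq_in_map => y hy /=; rewrite subnKC // v1.
Qed.

Lemma surj m : surjP m.
Proof.
elim/ltn_ind: m => m IH l hs pl sl.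
case: m IH hs => [|m] IH hs.
  case: l hs pl {sl} => [|x [|y s]] // _ pl.
  have := isperm_lt pl (mem_head x [::]); rewrite ltnS leqn0 => /eqP ->.
  by exists Leaf.
have hs2 : 1 < size l by rewrite hs.
have [j [hj|hj]] := key (isperm_uniq pl) hs2 sl.1 sl.2.
  by apply: surj_sum => //; exists j.
by apply: surj_skew => //; exists j.
Qed.

Section PermList.
Variable n : nat.

Definition plist (pi : {perm 'I_n.+1}) : seq nat := [seq pval pi i | i <- enum 'I_n.+1].

Lemma size_plist pi : size (plist pi) = n.+1.
Proof. by rewrite size_map size_enum_ord. Qed.

Lemma nth_plist pi j : j < n.+1 -> nth 0 (plist pi) j = val (pi (inord j)).
Proof.
move=> hj; rewrite (nth_map ord0) ?size_enum_ord //; congr (val (pi _)).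
by apply: val_inj; rewrite /= inordK // nth_enum_ord.
Qed.

Lemma pvalE pi (x : 'I_n.+1) : pval pi x = nth 0 (plist pi) x.
Proof. by rewrite nth_plist // inord_val. Qed.

Lemma isperm_plist pi : isperm (plist pi).
Proof.
apply: isperm_intro.
  rewrite map_inj_uniq ?enum_uniq // => x y /val_inj; exact: perm_inj.
by move=> x /mapP [i _ ->]; rewrite size_plist ltn_ord.
Qed.

Lemma plist_inj : injective plist.
Proof.
move=> p1 p2 e; apply/permP => x; apply: val_inj.
by rewrite -/(pval p1 x) -/(pval p2 x) !pvalE e.
Qed.

Lemma plist_surj (l : seq nat) : size l = n.+1 -> isperm l -> exists pi, plist pi = l.
Proof.
move=> hs pl.
have hb : forall (i : 'I_n.+1), nth 0 l i < n.+1.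
  move=> i; have hi : val i < size l by rewrite hs ltn_ord.
  by have := isperm_lt pl (mem_nth 0 hi); rewrite hs.
pose f := fun i : 'I_n.+1 => (inord (nth 0 l i) : 'I_n.+1).
have finj : injective f.
  move=> i j /(congr1 val); rewrite /f /= !inordK // => e.
  apply: val_inj; apply/eqP; rewrite -(nth_uniq 0 _ _ (isperm_uniq pl)) ?hs ?ltn_ord //.
  by rewrite e.
exists (perm finj); apply: (@eq_from_nth _ 0); rewrite size_plist ?hs // => j hj.
by rewrite nth_plist // permE /f /= (inordK (hb (inord j))) inordK.
Qed.

Lemma desR_sum (s : seq nat) :
  \sum_(i < (size s).-1) (nth 0 s i.+1 < nth 0 s i) = desR s.
Proof.
elim: s => [|x [|y t] IH]; first by rewrite big_ord0.
  by rewrite big_ord0.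
rewrite big_ord_recl.
have -> : desR [:: x, y & t] = (y < x) + desR (y :: t) by [].
by rewrite -IH.
Qed.

Lemma des_plist pi : des pi = desR (plist pi).
Proof. by rewrite /des -desR_sum size_plist. Qed.

End PermList.

Definition v4 (v0 v1 v2 v3 : nat) (a : 'I_4) := nth 0 [:: v0; v1; v2; v3] a.

Lemma ord4_cases (P : 'I_4 -> Prop) : P (inord 0) -> P (inord 1) -> P (inord 2) -> P (inord 3) ->
  forall a, P a.
Proof.
move=> h0 h1 h2 h3 [[|[|[|[|a]]]] ha] //.
- by have -> : Ordinal ha = inord 0 by apply: val_inj; rewrite /= inordK.
- by have -> : Ordinal ha = inord 1 by apply: val_inj; rewrite /= inordK.
- by have -> : Ordinal ha = inord 2 by apply: val_inj; rewrite /= inordK.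
- by have -> : Ordinal ha = inord 3 by apply: val_inj; rewrite /= inordK.
Qed.

Lemma pat2413_spec v0 v1 v2 v3 : P2413 lt' v0 v1 v2 v3 <->
  forall a b : 'I_4, (v4 v0 v1 v2 v3 a < v4 v0 v1 v2 v3 b) = (pat2413 a < pat2413 b).
Proof.
rewrite /P2413 /lt' /v4 /pat2413; split.
  move=> /and3P [h1 h2 h3].
  apply: ord4_cases; apply: ord4_cases; rewrite !inordK //=;
    by [lia | apply/negbTE; rewrite -leqNgt; lia].
move=> H; have := H (inord 2) (inord 0); have := H (inord 0) (inord 3);
  have := H (inord 3) (inord 1); rewrite !inordK //= => -> -> ->.
by [].
Qed.

Lemma pat3142_spec v0 v1 v2 v3 : P2413 gtn' v0 v1 v2 v3 <->
  forall a b : 'I_4, (v4 v0 v1 v2 v3 a < v4 v0 v1 v2 v3 b) = (pat3142 a < pat3142 b).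
Proof.
rewrite /P2413 /gtn' /v4 /pat3142; split.
  move=> /and3P [h1 h2 h3].
  apply: ord4_cases; apply: ord4_cases; rewrite !inordK //=;
    by [lia | apply/negbTE; rewrite -leqNgt; lia].
move=> H; have := H (inord 0) (inord 2); have := H (inord 3) (inord 0);
  have := H (inord 1) (inord 3); rewrite !inordK //= => -> -> ->.
by [].
Qed.

Lemma contains_has4 n (p : 'I_4 -> nat) (r : rel nat) (pi : {perm 'I_n.+1}) :
  (forall v0 v1 v2 v3, P2413 r v0 v1 v2 v3 <->
     forall a b, (v4 v0 v1 v2 v3 a < v4 v0 v1 v2 v3 b) = (p a < p b)) ->
  contains_pat p pi <-> has4 (P2413 r) (plist pi).
Proof.
move=> Hp; split.
- move/existsP => [f /forallP H].
  have Hab : forall a b : 'I_4, ((a < b) ==> (f a < f b)) &&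
      ((pval pi (f a) < pval pi (f b)) == (p a < p b)) := fun a b => forallP (H a) b.
  pose g := fun k => val (f (inord k)).
  have inc : forall k k', k < k' -> k' < 4 -> g k < g k'.
    move=> k k' h1 h2; have := Hab (inord k) (inord k').
    by rewrite !inordK ?h1 ?(ltn_trans h1 h2) //= => /andP [].
  exists (g 0), (g 1), (g 2), (g 3); split; try by apply: inc.
    by rewrite size_plist ltn_ord.
  apply/Hp => a b.
  have vE : forall c, v4 (nth 0 (plist pi) (g 0)) (nth 0 (plist pi) (g 1))
     (nth 0 (plist pi) (g 2)) (nth 0 (plist pi) (g 3)) c = pval pi (f c).
    by apply: (ord4_cases (P := fun c => v4 _ _ _ _ c = pval pi (f c)));
      rewrite /= /v4 inordK //= /g -pvalE.
  by rewrite !vE; case/andP: (Hab a b) => _ /eqP.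
- move=> [i0 [i1 [i2 [i3 [h01 h12 h23 h3 hR]]]]]; rewrite size_plist in h3.
  pose ix := fun a : 'I_4 => nth 0 [:: i0; i1; i2; i3] a.
  have ixb : forall a, ix a < n.+1.
    by apply: (ord4_cases (P := fun a => ix a < n.+1)); rewrite /= /ix inordK //=; lia.
  pose f := [ffun a => (inord (ix a) : 'I_n.+1)].
  have fE : forall a, val (f a) = ix a by move=> a; rewrite ffunE /= inordK.
  apply/existsP; exists f; apply/forallP => a; apply/forallP => b; apply/andP; split.
    apply/implyP; rewrite !fE; move: a b.
    apply: (ord4_cases (P := fun a => forall b : 'I_4, a < b -> ix a < ix b));
    apply: (ord4_cases (P := fun b => _ < b -> _ < ix b)); rewrite /= /ix !inordK //=; lia.
  have vE : forall c, v4 (nth 0 (plist pi) i0) (nth 0 (plist pi) i1)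
     (nth 0 (plist pi) i2) (nth 0 (plist pi) i3) c = nth 0 (plist pi) (ix c).
    by apply: (ord4_cases (P := fun c => v4 _ _ _ _ c = nth 0 (plist pi) (ix c))); rewrite /= /v4 /ix inordK.
  apply/eqP; rewrite !pvalE !fE -!vE.
  exact: (Hp _ _ _ _).1 hR a b.
Qed.

Lemma avoidsE n (pi : {perm 'I_n.+1}) : avoids_2413_3142 pi <-> sepL (plist pi).
Proof.
rewrite /avoids_2413_3142 /sepL.
have e1 := contains_has4 pi pat2413_spec.
have e2 := contains_has4 pi pat3142_spec.
split.
  by move=> /andP [/negP h1 /negP h2]; split => h; [apply: h1; apply/e1 | apply: h2; apply/e2].
by move=> [h1 h2]; apply/andP; split; apply/negP => h; [apply: h1; apply/e1 | apply: h2; apply/e2].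
Qed.

Fixpoint tree_eqb (t1 t2 : tree) : bool :=
  match t1, t2 with
  | Leaf, Leaf => true
  | Node a l r, Node b l' r' => [&& a == b, tree_eqb l l' & tree_eqb r r']
  | _, _ => false
  end.

Lemma tree_eqP : Equality.axiom tree_eqb.
Proof.
elim=> [|a l IHl r IHr] [|b l' r'] /=; try by constructor.
case: eqP => [->|nab]; last by constructor => -[].
case: IHl => [->|nl]; last by constructor => -[].
by case: IHr => [->|nr]; constructor => // -[].
Qed.

HB.instance Definition _ := hasDecEq.Build tree tree_eqP.

Definition nodes_at (ts : nat -> seq tree) (m : nat) : seq tree :=
  flatten [seq flatten [seq flatten [seq [:: Node true L R; Node false L R] | R <- ts (m - i)]
            | L <- ts i] | i <- iota 0 m.+1].

Fixpoint tr (f m : nat) : seq tree :=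
  match f with
  | 0 => if m is 0 then [:: Leaf] else [::]
  | f'.+1 => if m is m'.+1 then nodes_at (tr f') m' else [:: Leaf]
  end.

Definition trees m := tr m m.

Lemma nodes_at_ext ts ts' m : (forall i, i <= m -> ts i = ts' i) ->
  nodes_at ts m = nodes_at ts' m.
Proof.
move=> H; rewrite /nodes_at; congr flatten; apply/eq_in_map => i.
by rewrite mem_iota /= ltnS => hi; rewrite !H // leq_subr.
Qed.

Lemma tr_fuel f g m : m <= f -> m <= g -> tr f m = tr g m.
Proof.
elim: f g m => [|f IH] [|g] [|m] //= hf hg.
apply: nodes_at_ext => i hi; apply: IH; exact: leq_trans hi _.
Qed.

Lemma treesS m : trees m.+1 = nodes_at trees m.
Proof. by rewrite /trees /=; apply: nodes_at_ext => i hi; apply: tr_fuel. Qed.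

Lemma trees0 : trees 0 = [:: Leaf].
Proof. by []. Qed.

Lemma mem_nodes_at ts m x : x \in nodes_at ts m <->
  exists a L R i, [/\ x = Node a L R, i <= m, L \in ts i & R \in ts (m - i)].
Proof.
split.
  move/flattenP => [s1 /mapP [i hi ->] /flattenP [s2 /mapP [L hL ->] /flattenP [s3 /mapP [R hR ->]]]].
  rewrite !inE => /orP [] /eqP ->.
    by exists true, L, R, i; split => //; move: hi; rewrite mem_iota ltnS.
  by exists false, L, R, i; split => //; move: hi; rewrite mem_iota ltnS.
move=> [a [L [R [i [-> hi hL hR]]]]].
apply/flattenP; eexists; first by apply/mapP; exists i => //; rewrite mem_iota ltnS.
apply/flattenP; eexists; first by apply/mapP; exists L.
apply/flattenP; eexists; first by apply/mapP; exists R.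
by case: a; rewrite !inE eqxx ?orbT.
Qed.

Lemma mem_trees T m : (T \in trees m) = (nnodes T == m).
Proof.
elim: T m => [|a L IL R IR] [|m] //=.
- rewrite treesS; apply/idP => /mem_nodes_at [? [? [? [? []]]]] //.
- apply/idP/idP.
    rewrite treesS => /mem_nodes_at [b [L' [R' [i [[_ <- <-] hi]]]]].
    by rewrite IL IR => /eqP -> /eqP ->; rewrite eqSS subnKC.
  rewrite eqSS => /eqP hm; rewrite treesS; apply/mem_nodes_at.
  exists a, L, R, (nnodes L); split => //; first by rewrite -hm leq_addr.
  - by rewrite IL.
  - by rewrite IR -hm addKn.
Qed.

Lemma uniq_flatten_map (I T : eqType) (s : seq I) (g : I -> seq T) :
  uniq s -> (forall i, i \in s -> uniq (g i)) ->
  (forall i j x, i \in s -> j \in s -> x \in g i -> x \in g j -> i = j) ->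
  uniq (flatten (map g s)).
Proof.
elim: s => //= i s IH /andP [his hu] hg hd.
rewrite cat_uniq hg ?mem_head //= IH //; last 2 first.
- by move=> j hj; apply: hg; rewrite inE hj orbT.
- by move=> j k x hj hk; apply: hd; rewrite inE ?hj ?hk orbT.
rewrite andbT; apply/hasPn => x /flattenP [s' /mapP [j hj ->] hxj]; apply/negP => hxi.
have hj' : j \in i :: s by rewrite inE hj orbT.
have := hd i j x (mem_head _ _) hj' hxi hxj.
by move=> eij; move: his; rewrite eij hj.
Qed.

Lemma uniq_trees m : uniq (trees m).
Proof.
elim/ltn_ind: m => [[|m]] IH //.
rewrite treesS /nodes_at.
have IH' : forall i, i <= m -> uniq (trees i) by move=> i hi; apply: IH; rewrite ltnS.
apply: uniq_flatten_map; first exact: iota_uniq.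
- move=> i; rewrite mem_iota ltnS /= => hi.
  apply: uniq_flatten_map; first exact: IH'.
  + move=> L hL; apply: uniq_flatten_map; first by apply: IH'; rewrite leq_subr.
    * by move=> R _ /=; rewrite ?inE.
    * move=> R1 R2 x _ _ hx1 hx2.
      have [a1 e1] : exists a, x = Node a L R1 by move: hx1; rewrite !inE => /orP [] /eqP ->; eexists.
      have [a2 e2] : exists a, x = Node a L R2 by move: hx2; rewrite !inE => /orP [] /eqP ->; eexists.
      by rewrite e1 in e2; case: e2.
  + move=> L1 L2 x _ _ /flattenP [s1 /mapP [R1 _ ->] hx1] /flattenP [s2 /mapP [R2 _ ->]].
    have [a1 e1] : exists a, x = Node a L1 R1 by move: hx1; rewrite !inE => /orP [] /eqP ->; eexists.
    move=> hx2; have [a2 e2] : exists a, x = Node a L2 R2 by move: hx2; rewrite !inE => /orP [] /eqP ->; eexists.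
    by rewrite e1 in e2; case: e2.
- move=> i j x _ _ /flattenP [s1 /mapP [L1 hL1 ->] /flattenP [s2 /mapP [R1 _ ->] hx1]]
    /flattenP [s3 /mapP [L2 hL2 ->] /flattenP [s4 /mapP [R2 _ ->] hx2]].
  have [a1 e1] : exists a, x = Node a L1 R1 by move: hx1; rewrite !inE => /orP [] /eqP ->; eexists.
  have [a2 e2] : exists a, x = Node a L2 R2 by move: hx2; rewrite !inE => /orP [] /eqP ->; eexists.
  rewrite e1 in e2; case: e2 => _ eL _.
  by move: hL1 hL2; rewrite !mem_trees eL => /eqP <- /eqP <-.
Qed.

Import GRing.Theory.
Local Open Scope ring_scope.

Fixpoint bseqs (l : nat) : seq (seq bool) :=
  if l is l'.+1 then [seq b :: s | b <- [:: true; false], s <- bseqs l'] else [:: [::]].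

Definition sumlen (z : seq bool -> {poly int}) (l : nat) := \sum_(s <- bseqs l) z s.

Lemma sumlenS z l : sumlen z l.+1 = sumlen (fun s => z (true :: s) + z (false :: s)) l.
Proof.
rewrite /sumlen; change (bseqs l.+1) with [seq b :: s | b <- [:: true; false], s <- bseqs l].
by rewrite big_allpairs_dep big_cons big_seq1 [RHS]big_split.
Qed.

Fixpoint Hw (w z : seq bool -> {poly int}) (T : tree) {struct T} : {poly int} :=
  match T with
  | Leaf => z [::]
  | Node a L R => (\prod_(c <- chains true L) w c) * Hw w (fun s => z (a :: s)) R
  end.

Lemma Hw_spec w z T : Hw w z T = z (spine T) * \prod_(c <- chains false T) w c.
Proof.
elim: T z => [|a L IL R IR] z /=; first by rewrite big_nil mulr1.
by rewrite IR big_cat /= mulrCA.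
Qed.

Lemma F_H w T : w [::] = 1 -> \prod_(c <- chains true T) w c = Hw w w T.
Proof.
move=> w0; rewrite Hw_spec chains_true; case: T => [|a L R] /=.
  by rewrite !big_nil w0 mulr1.
by rewrite big_cons.
Qed.

Lemma Hw_add w z1 z2 T : Hw w (fun s => z1 s + z2 s) T = Hw w z1 T + Hw w z2 T.
Proof. by rewrite !Hw_spec mulrDl. Qed.

Lemma sum_nodes_at ts m (F : tree -> {poly int}) :
  \sum_(T <- nodes_at ts m) F T = \sum_(i <- iota 0 m.+1) \sum_(L <- ts i)
     \sum_(R <- ts (m - i)%N) (F (Node true L R) + F (Node false L R)).
Proof.
rewrite /nodes_at big_flatten big_map; apply: eq_bigr => i _.
rewrite big_flatten big_map; apply: eq_bigr => L _.
rewrite big_flatten big_map; apply: eq_bigr => R _.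
by rewrite big_cons big_seq1.
Qed.

Lemma sum_main (x y : seq bool -> {poly int}) : x [::] = 1 -> y [::] = 1 ->
  (forall l, sumlen x l = sumlen y l) ->
  forall m z z', (forall l, sumlen z l = sumlen z' l) ->
  \sum_(T <- trees m) Hw x z T = \sum_(T <- trees m) Hw y z' T.
Proof.
move=> x0 y0 hxy m; elim/ltn_ind: m => -[|m] IH z z' hz.
  by rewrite trees0 !big_seq1 /=; have := hz 0%N; rewrite /sumlen /= !big_seq1.
rewrite !treesS !sum_nodes_at; apply: eq_big_seq => i; rewrite mem_iota /= ltnS => hi.
have nf : forall w zz k1 k2, w [::] = 1 ->
   \sum_(L <- trees k1) \sum_(R <- trees k2) (Hw w zz (Node true L R) + Hw w zz (Node false L R)) =
   (\sum_(L <- trees k1) Hw w w L) * \sum_(R <- trees k2) Hw w (fun s => zz (true :: s) + zz (false :: s)) R.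
  move=> w zz k1 k2 w0; rewrite mulr_suml; apply: eq_bigr => L _.
  rewrite mulr_sumr; apply: eq_bigr => R _ /=.
  by rewrite -mulrDr Hw_add F_H.
rewrite !nf //.
have e1 : \sum_(L <- trees i) Hw x x L = \sum_(L <- trees i) Hw y y L.
  by apply: IH => //; rewrite ltnS.
have e2 : \sum_(R <- trees (m - i)) Hw x (fun s => z (true :: s) + z (false :: s)) R =
          \sum_(R <- trees (m - i)) Hw y (fun s => z' (true :: s) + z' (false :: s)) R.
  apply: IH; first by rewrite ltnS leq_subr.
  by move=> l; rewrite -!sumlenS.
by rewrite e1 e2.
Qed.

Lemma natr_andb (a b : bool) : ((a && b)%:R : {poly int}) = a%:R * b%:R.
Proof. by case: a; case: b; rewrite /= ?mulr1 ?mul1r ?mul0r ?mulr0. Qed.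

Definition neqb := fun a b : bool => a != b.

Fixpoint alt (b : bool) (l : nat) : seq bool :=
  if l is l'.+1 then b :: alt (~~ b) l' else [::].

Lemma bseqsS l : bseqs l.+1 = [seq b :: s | b <- [:: true; false], s <- bseqs l].
Proof. by []. Qed.

Lemma sum_path (g : seq bool -> {poly int}) l b :
  \sum_(s <- bseqs l) (path neqb b s)%:R * g s = g (alt (~~ b) l).
Proof.
elim: l g b => [|l IH] g b; first by rewrite /= big_seq1 mul1r.
rewrite bseqsS big_allpairs_dep big_cons big_seq1.
have IHt := IH (fun s => g (true :: s)) true.
have IHf := IH (fun s => g (false :: s)) false.
case: b => /=.
  rewrite [X in X + _]big1 ?add0r ?IHf // => s _.
  by rewrite /neqb /= mul0r.
rewrite [X in _ + X]big1 ?addr0 ?IHt // => s _.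
by rewrite /neqb /= mul0r.
Qed.

Lemma sum_sorted (g : seq bool -> {poly int}) l :
  \sum_(s <- bseqs l.+1) (sorted neqb s)%:R * g s = g (alt true l.+1) + g (alt false l.+1).
Proof.
rewrite bseqsS big_allpairs_dep big_cons big_seq1 /=.
by rewrite (sum_path (fun s => g (true :: s))) (sum_path (fun s => g (false :: s))).
Qed.

Lemma count_alt L : count negb (alt true L) = L./2 /\ count negb (alt false L) = uphalf L.
Proof.
elim: L => [|L [IH1 IH2]] //=; split.
  by rewrite IH2 uphalfE.
by rewrite IH1 add1n.
Qed.

Lemma size_alt b L : size (alt b L) = L.
Proof. by elim: L b => //= L IH b; rewrite IH. Qed.

Definition xw (c : seq bool) : {poly int} :=
  (sorted neqb c)%:R * ('X^(count negb c) * (1 + 'X) ^+ 0).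
Definition yw (c : seq bool) : {poly int} :=
  (sorted neqb c && (odd (size c) ==> (head false c == true)))%:R *
  ('X^((size c)./2) * (1 + 'X) ^+ (odd (size c))).

Lemma xw0 : xw [::] = 1.
Proof. by rewrite /xw /= expr0 !mulr1. Qed.
Lemma yw0 : yw [::] = 1.
Proof. by rewrite /yw /= expr0 !mulr1. Qed.

Lemma hxy l : sumlen xw l = sumlen yw l.
Proof.
case: l => [|l]; first by rewrite /sumlen /= !big_seq1 xw0 yw0.
rewrite /sumlen /xw.
rewrite (sum_sorted (fun c => 'X^(count negb c) * (1 + 'X) ^+ 0)).
have -> : \sum_(s <- bseqs l.+1) yw s = \sum_(s <- bseqs l.+1) (sorted neqb s)%:R *
   ((odd (size s) ==> (head false s == true))%:R * ('X^((size s)./2) * (1 + 'X) ^+ (odd (size s)))).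
  by apply: eq_bigr => s _; rewrite /yw natr_andb -mulrA.
rewrite sum_sorted /= !size_alt.
have [c1 c2] := count_alt l.
rewrite c1 c2 uphalf_half.
case: (odd l) => /=; rewrite ?expr0 ?expr1 ?mulr1 ?mul1r ?mul0r ?addr0 ?add0n //.
by rewrite add1n exprSr mulrDr mulr1.
Qed.

Lemma prod_w (cs : seq (seq bool)) (b : seq bool -> bool) (k j : seq bool -> nat) (Y : {poly int}) :
  \prod_(c <- cs) ((b c)%:R * ('X^(k c) * Y ^+ (j c))) =
  (all b cs)%:R * ('X^(\sum_(c <- cs) k c)%N * Y ^+ (\sum_(c <- cs) j c)%N).
Proof.
elim: cs => [|c cs IH]; first by rewrite !big_nil /= !expr0 !mulr1.
rewrite !big_cons IH /= !exprD natr_andb.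
ring.
Qed.

Lemma sum_chains_true (f : seq bool -> nat) T : f [::] = 0%N ->
  (\sum_(c <- chains true T) f c = \sum_(c <- chains false T) f c + f (spine T))%N.
Proof.
move=> f0; rewrite chains_true; case: T => [|a L R] /=; first by rewrite !big_nil f0.
by rewrite big_cons addnC.
Qed.

Lemma sum_chains_nodes (f : seq bool -> nat) (g : bool -> nat) T :
  f [::] = 0%N -> (forall a s, f (a :: s) = g a + f s)%N ->
  (\sum_(c <- chains false T) f c + f (spine T))%N =
  (fix ns (T : tree) : nat := match T with Leaf => 0 | Node a L R => g a + ns L + ns R end)%N T.
Proof.
move=> f0 fS; elim: T => [|a L IL R IR] /=; first by rewrite big_nil f0.
rewrite big_cat sum_chains_true // IL fS -IR /=; lia.
Qed.

Lemma sum_count_negb T : (\sum_(c <- right_chains T) count negb c)%N = negs T.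
Proof.
by rewrite /right_chains sum_chains_true // (sum_chains_nodes (g := fun a => ~~ a)).
Qed.

Lemma sum_size T : (\sum_(c <- right_chains T) size c)%N = nnodes T.
Proof.
rewrite /right_chains sum_chains_true // (sum_chains_nodes (g := fun a => 1%N)) //.
Qed.

Lemma sum_bool_count (T : Type) (P : pred T) (s : seq T) : (\sum_(x <- s) P x)%N = count P s.
Proof. by elim: s => [|x s IH]; rewrite ?big_nil ?big_cons ?IH. Qed.

Lemma sum_half (cs : seq (seq bool)) :
  ((\sum_(c <- cs) (size c)./2).*2 + \sum_(c <- cs) odd (size c) = \sum_(c <- cs) size c)%N.
Proof.
elim: cs => [|c cs IH]; first by rewrite !big_nil.
rewrite !big_cons doubleD -{3}(odd_double_half (size c)) -IH; lia.
Qed.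

Lemma Fx T : \prod_(c <- right_chains T) xw c = (good T)%:R * 'X^(negs T).
Proof.
rewrite /xw (prod_w (right_chains T) (sorted neqb) (count negb) (fun _ => 0%N)).
rewrite sum_count_negb big1_eq expr0 mulr1 -is_disk_good.
by [].
Qed.

Definition oddc (c : seq bool) := odd (size c) ==> (head false c == true).

Lemma Fy T : \prod_(c <- right_chains T) yw c =
  (is_disk T && all oddc (right_chains T))%:R *
  ('X^((\sum_(c <- right_chains T) (size c)./2)%N) * (1 + 'X) ^+ r_o T).
Proof.
rewrite /yw (prod_w (right_chains T) (fun c => sorted neqb c && oddc c) (fun c => (size c)./2)
  (fun c => odd (size c))).
by rewrite all_predI sum_bool_count.
Qed.

Lemma Fy_gamma n T : nnodes T = n -> \prod_(c <- right_chains T) yw c =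
  \sum_(k < n./2.+1) (in_DT1 n.+1 k T)%:R * ('X^k * (1 + 'X) ^+ (n - 2 * k)%N).
Proof.
move=> hT; rewrite Fy.
set s := (\sum_(c <- right_chains T) (size c)./2)%N.
have hs : (s.*2 + r_o T = n)%N.
  by rewrite /r_o -sum_bool_count /s sum_half sum_size.
have hin : forall k, in_DT1 n.+1 k T =
    (is_disk T && all oddc (right_chains T)) && (r_o T == n - 2 * k)%N.
  move=> k; rewrite /in_DT1 /in_DT hT eqxx andbT /=.
  by rewrite /oddc; case: (is_disk T); case: (r_o T == _); case: (all _ _).
have hsn : (s < n./2.+1)%N by rewrite ltnS geq_half_double -hs leq_addr.
case D: (is_disk T && all oddc (right_chains T)).
  rewrite (bigD1 (Ordinal hsn)) //= big1 ?addr0.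
    rewrite hin D /=.
    have -> : (n - 2 * s = r_o T)%N by move: hs; rewrite -muln2; lia.
    by rewrite eqxx.
  move=> j hj; rewrite hin D /=.
  have hj2 : (j.*2 <= n)%N by rewrite -geq_half_double -ltnS ltn_ord.
  case: eqP => [e|]; last by rewrite mul0r.
  exfalso; move: hj; rewrite -val_eqE /= => /negP; apply.
  apply/eqP; move: hj2 e hs; move: (nat_of_ord j) => jn; rewrite -!muln2; lia.
rewrite mul0r big1 // => j _; rewrite hin D /=.
by rewrite mul0r.
Qed.

Lemma count_polyC (P : pred tree) (s : seq tree) :
  ((count P s)%:Z)%:P = \sum_(x <- s) ((P x)%:R : {poly int}).
Proof.
elim: s => [|x s IH]; first by rewrite big_nil.
by rewrite big_cons /= PoszD polyCD IH; case: (P x).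
Qed.

Lemma sum_trees_gamma n : \sum_(T <- trees n) \prod_(c <- right_chains T) yw c =
  gamma_expansion n.+1 (fun k => (count (in_DT1 n.+1 k) (trees n))%:Z).
Proof.
rewrite /gamma_expansion [(n.+1).-1]/=.
rewrite (eq_big_seq (fun T => \sum_(k < n./2.+1) (in_DT1 n.+1 k T)%:R *
   ('X^k * (1 + 'X) ^+ (n - 2 * k)%N))); last first.
  by move=> T hT; apply: Fy_gamma; move: hT; rewrite mem_trees => /eqP.
rewrite exchange_big /=; apply: eq_bigr => k _.
by rewrite -mulr_suml count_polyC mulrA.
Qed.

Lemma coef0_1X e : ((1 + 'X) ^+ e : {poly int})`_0 = 1.
Proof. by rewrite -horner_coef0 horner_exp !hornerE expr1n. Qed.

Lemma gamma_unique N g g' : gamma_expansion N g = gamma_expansion N g' ->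
  forall k, (k <= (N.-1)./2)%N -> g k = g' k.
Proof.
rewrite /gamma_expansion; set m := N.-1 => e.
pose d k := g k - g' k.
have H0 : \sum_(k < m./2.+1) (d k)%:P * 'X^k * (1 + 'X) ^+ (m - 2 * k)%N = 0.
  rewrite -[RHS](subrr (\sum_(k < m./2.+1) (g' k)%:P * 'X^k * (1 + 'X) ^+ (m - 2 * k)%N)).
  rewrite -{1}e -sumrB; apply: eq_bigr => k _.
  by rewrite /d polyCB !mulrBl.
suff : forall k, (k < m./2.+1)%N -> d k = 0.
  by move=> H k hk; apply/eqP; rewrite -subr_eq0; apply/eqP; apply: H; rewrite ltnS.
elim/ltn_ind => k IH hk.
have := congr1 (fun p : {poly int} => p`_k) H0; rewrite coef_sum coef0 /=.
rewrite (bigD1 (Ordinal hk)) //= big1 ?addr0.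
  by rewrite -mulrA coefCM coefXnM ltnn subnn coef0_1X mulr1.
move=> j hj; rewrite -mulrA coefCM coefXnM.
case: ltnP => hkj; first by rewrite mulr0.
have hjk : (j < k)%N.
  by rewrite ltn_neqAle hkj andbT; move: hj; rewrite -val_eqE /=.
by rewrite IH ?mul0r // (ltn_trans hjk hk).
Qed.

Lemma In_mem (T : eqType) (x : T) (s : seq T) : List.In x s <-> x \in s.
Proof.
elim: s => [|y s IH] //=; rewrite inE; split.
  by move=> [->|/IH ->]; rewrite ?eqxx ?orbT.
by move=> /orP [/eqP ->|/IH]; [left | right].
Qed.

Lemma uniq_NoDup (T : eqType) (s : seq T) : uniq s -> List.NoDup s.
Proof.
elim: s => [|x s IH] /=; first by constructor.
move=> /andP [hx hu]; constructor; last exact: IH.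
by move/In_mem; apply/negP.
Qed.

Lemma size_length (T : Type) (s : seq T) : List.length s = size s.
Proof. by elim: s => //= x s ->. Qed.

Lemma des_poly_trees n :
  des_poly n.+1 = \sum_(T <- trees n | good T) 'X^(negs T).
Proof.
rewrite /des_poly.
have e1 : \sum_(pi : {perm 'I_n.+1} | avoids_2413_3142 pi) ('X^(des pi) : {poly int}) =
  \sum_(l <- map (@plist n) [seq pi <- index_enum {perm 'I_n.+1} | avoids_2413_3142 pi]) 'X^(desR l).
  by rewrite big_map big_filter; apply: eq_bigr => pi _; rewrite des_plist.
rewrite e1.
have hp : perm_eq (map (@plist n) [seq pi <- index_enum {perm 'I_n.+1} | avoids_2413_3142 pi])
                  (map ptree [seq T <- trees n | good T]).
  apply: uniq_perm.
  - rewrite map_inj_uniq ?filter_uniq ?index_enum_uniq //; exact: plist_inj.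
  - rewrite map_inj_in_uniq ?filter_uniq ?uniq_trees // => T1 T2.
    by rewrite !mem_filter => /andP [g1 _] /andP [g2 _]; apply: ptree_inj.
  move=> l; apply/idP/idP.
    move=> /mapP [pi]; rewrite mem_filter => /andP [hav _] ->.
    have [T [gT nT eT]] := surj (size_plist pi) (isperm_plist pi) (proj1 (avoidsE pi) hav).
    apply/mapP; exists T => //; rewrite mem_filter gT mem_trees nT eqxx.
    by [].
  move=> /mapP [T]; rewrite mem_filter mem_trees => /andP [gT /eqP nT] ->.
  have [pT sT] := ptree_props T; rewrite nT in sT.
  have [pi epi] := plist_surj sT pT.
  apply/mapP; exists pi => //; rewrite mem_filter mem_index_enum andbT.
  by apply/avoidsE; rewrite epi; exact: sep_ptree.
rewrite (perm_big _ hp) big_map big_filter.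
by apply: eq_bigr => T _; rewrite desR_ptree.
Qed.

Lemma des_poly_gamma n :
  des_poly n.+1 = gamma_expansion n.+1 (fun k => (count (in_DT1 n.+1 k) (trees n))%:Z).
Proof.
rewrite des_poly_trees -sum_trees_gamma big_mkcond /=.
have ex : \sum_(T <- trees n) (if good T then 'X^(negs T) else 0) =
          \sum_(T <- trees n) \prod_(c <- right_chains T) xw c.
  by apply: eq_bigr => T _; rewrite Fx; case: (good T); rewrite ?mul1r ?mul0r.
rewrite ex.
have hm := sum_main xw0 yw0 hxy n hxy.
transitivity (\sum_(T <- trees n) Hw xw xw T).
  by apply: eq_bigr => T _; apply: F_H; exact: xw0.
rewrite hm; apply: eq_bigr => T _; symmetry; apply: F_H; exact: yw0.
Qed.

Open Scope ring_scope.

Theorem theorem3p4 (n : nat) (hn : (1 <= n)%N) :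
  exists c : nat -> nat,
    (forall k : nat, (k <= (n.-1)./2)%N -> card_trees (in_DT1 n k) (c k)) /\
    des_poly n = gamma_expansion n (fun k => (c k)%:Z) /\
    (forall g : nat -> int, des_poly n = gamma_expansion n g ->
       forall k : nat, (k <= (n.-1)./2)%N -> g k = (c k)%:Z).
Proof.
case: n hn => [//|n] _.
exists (fun k => count (in_DT1 n.+1 k) (trees n)); split; [|split].
- move=> k hk; exists [seq T <- trees n | in_DT1 n.+1 k T]; split; [|split].
  + apply: uniq_NoDup; exact: filter_uniq (uniq_trees n).
  + move=> t; rewrite In_mem mem_filter; split; first by case/andP.
    move=> h; rewrite h mem_trees /=.
    by move: h => /and3P [/andP [_ ->] _ _].
  + by rewrite size_length size_filter.
- exact: des_poly_gamma.
- move=> g hg k hk.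
  have e : gamma_expansion n.+1 g = gamma_expansion n.+1 (fun k => (count (in_DT1 n.+1 k) (trees n))%:Z).
    by rewrite -hg des_poly_gamma.
  exact: (gamma_unique e hk).
Qed.
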